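(* Let $k\ge2$ and $\alpha>5$ be real. For $i=1,\dots,k-1$ let $a(i),b(i),c(i),d(i)\in\mathbb{C}$ with $|a(i)|=|d(i)|=1$ and $|b(i)|=|c(i)|=\alpha$. Let $x_1,\dots,x_k\in\mathbb{C}$ with $x_1\neq0$ satisfy $$c(1)x_1+d(1)x_2=0,\qquad b(2)x_1+c(2)x_2+d(2)x_3=0,$$ and $a(l)x_{l-2}+b(l)x_{l-1}+c(l)x_l+d(l)x_{l+1}=0$ for $3\le l\le k-1$. Then $|x_{l+1}|\ge(\alpha-2)|x_l|$ for $l=1,2,\dots,k-1$. *)

(* Defs.v *)
From mathcomp Require Import all_boot all_order all_algebra.
From mathcomp Require Export complex.

(* Main.v *)
Require Import Defs.
From mathcomp Require Import all_boot all_order all_algebra.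
From mathcomp Require Import complex.
From mathcomp Require Import ring lra zify.
From Stdlib Require Import Lia.
Import Order.TTheory GRing.Theory Num.Theory.
Local Open Scope ring_scope.
Local Open Scope complex_scope.

Section N.
Variable R : rcfType.
Definition nn (z : R[i]) : R := complex.Re `|z|.
Lemma nnE z : `|z| = (nn z)%:C.
Proof. rewrite /nn normc_def. reflexivity. Qed.
Lemma nn_ge0 z : 0 <= nn z.
Proof. rewrite -lecR -nnE; exact: normr_ge0. Qed.
Lemma nnM u v : nn (u * v) = nn u * nn v.
Proof. by apply: complexI; rewrite rmorphM /= -!nnE normrM. Qed.
Lemma nnN u : nn (- u) = nn u.
Proof. by apply: complexI; rewrite -!nnE normrN. Qed.
Lemma nnD u v : nn (u + v) <= nn u + nn v.
Proof. by rewrite -lecR rmorphD /= -!nnE ler_normD. Qed.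
Lemma nnC r : `|r%:C| = r%:C -> nn r%:C = r.
Proof. by move=> h; rewrite /nn h. Qed.
End N.
Arguments nnE {R}. Arguments nn_ge0 {R}. Arguments nnM {R}. Arguments nnN {R}. Arguments nnD {R}.

Lemma key (R : rcfType) (k : nat) (al : R) (y : nat -> R) :
  (2 <= k)%N -> 5 < al -> (forall j, 0 <= y j) ->
  y 2%N = al * y 1%N ->
  ((3 <= k)%N -> al * y 2%N <= al * y 1%N + y 3%N) ->
  (forall m, (m.+3 <= k.-1)%N -> al * y m.+3 <= y m.+1 + al * y m.+2 + y m.+4) ->
  forall l, (1 <= l <= k.-1)%N -> (al - 2) * y l <= y l.+1.
Proof.
move=> k2 a5 y0 e1 e2 e3.
elim/ltn_ind => -[|[|[|m]]] IH /andP[l1 lk] //.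
- by rewrite e1; have := y0 1%N; nra.
- have k3 : (3 <= k)%N by lia.
  have := e2 k3; have := y0 1%N; rewrite e1; nra.
- have h1 : (al - 2) * y m.+1 <= y m.+2 by apply: IH => //; lia.
  have h2 : (al - 2) * y m.+2 <= y m.+3 by apply: IH => //; lia.
  have h3 := e3 m lk.
  have := y0 m.+1; have := y0 m.+2; have := y0 m.+3.
  nra.
Qed.

Theorem lemma4p1 (R : rcfType) (k : nat) (alpha : R) (a b c d x : nat -> R[i]) :
  (2 <= k)%N -> 5 < alpha ->
  (forall i, (1 <= i <= k.-1)%N ->
     `|a i| = 1 /\ `|d i| = 1 /\ `|b i| = alpha%:C /\ `|c i| = alpha%:C) ->
  x 1%N != 0 ->
  c 1%N * x 1%N + d 1%N * x 2%N = 0 ->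
  ((3 <= k)%N -> b 2%N * x 1%N + c 2%N * x 2%N + d 2%N * x 3%N = 0) ->
  (forall l, (3 <= l <= k.-1)%N ->
     a l * x (l - 2)%N + b l * x (l - 1)%N + c l * x l + d l * x l.+1 = 0) ->
  forall l, (1 <= l <= k.-1)%N -> (alpha - 2)%:C * `|x l| <= `|x l.+1|.
Proof.
move=> k2 a5 hn _ E1 E2 E3 l hl.
have nn1 : forall z : R[i], `|z| = 1 -> nn _ z = 1.
  by move=> z h; apply: complexI; rewrite -nnE h.
have nna : forall z : R[i], `|z| = alpha%:C -> nn _ z = alpha.
  by move=> z h; apply: complexI; rewrite -nnE h.
rewrite !nnE -rmorphM lecR /=.
apply: (@key R k alpha (fun j => nn R (x j)) k2 a5 (fun j => nn_ge0 (x j)) _ _ _ l hl).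
- have [_ [hd [_ hc]]] := hn 1%N ltac:(lia).
  have : c 1%N * x 1%N = - (d 1%N * x 2%N) by apply/eqP; rewrite -addr_eq0 E1.
  by move/(congr1 (@nn R)); rewrite nnN !nnM (nn1 _ hd) (nna _ hc) mul1r => <-.
- move=> k3; have [_ [hd [hb hc]]] := hn 2%N ltac:(lia).
  have : c 2%N * x 2%N = - (b 2%N * x 1%N) - d 2%N * x 3%N.
    by rewrite -[LHS]subr0 -(E2 k3); ring.
  move/(congr1 (@nn R)); rewrite nnM (nna _ hc) => ->.
  by apply: le_trans (nnD _ _) _; rewrite !nnN !nnM (nn1 _ hd) (nna _ hb) mul1r.
- move=> m hm; have [ha [hd [hb hc]]] := hn m.+3 ltac:(lia).
  have := E3 m.+3 ltac:(lia).
  have -> : (m.+3 - 2 = m.+1)%N by [].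
  have -> : (m.+3 - 1 = m.+2)%N by [].
  move=> E.
  have : c m.+3 * x m.+3 = - (a m.+3 * x m.+1 + b m.+3 * x m.+2) - d m.+3 * x m.+4.
    by rewrite -[LHS]subr0 -E; ring.
  move/(congr1 (@nn R)); rewrite nnM (nna _ hc) => ->.
  apply: le_trans (nnD _ _) _; rewrite !nnN nnM (nn1 _ hd) mul1r lerD2r.
  by apply: le_trans (nnD _ _) _; rewrite !nnM (nn1 _ ha) (nna _ hb) mul1r.
Qed.
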